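(* Let $K\ge 2$, let $\mathcal{D}$ be a probability distribution on $\mathcal{X}\times\mathcal{Y}$ with $\mathcal{Y}=\{1,\dots,K\}$, and let $\rho$ be a probability distribution over classifiers $h:\mathcal{X}\to\mathcal{Y}$. Let $W_\rho(X,Y)=\mathbb{E}_{h\sim\rho}[\mathbb{1}(h(X)\neq Y)]$ for $(X,Y)\sim\mathcal{D}$. Suppose $\rho$ is competent, i.e. for every $0\le t\le 1/2$, $$\mathbb{P}_{\mathcal{D}}\big(W_\rho\in[t,1/2)\big)\;\ge\;\mathbb{P}_{\mathcal{D}}\big(W_\rho\in[1/2,1-t]\big).$$ Then $$L(h_{\mathrm{MV}})\le\min\left\{\frac{4(K-1)}{K}\Big(\mathbb{E}_{h\sim\rho}[L(h)]-\tfrac12\mathbb{E}_{h,h'\sim\rho}[D(h,h')]\Big),\;\mathbb{E}_{h\sim\rho}[L(h)]\right\}$$ and $$L(h_{\mathrm{MV}})\ge \mathbb{E}_{h\sim\rho}[L(h)]-\mathbb{E}_{h,h'\sim\rho}[D(h,h')].$$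
   Context: The error rate of a classifier is $L(h)=\mathbb{E}_{(X,Y)\sim\mathcal{D}}[\mathbb{1}(h(X)\neq Y)]$. The majority vote classifier is $h_{\mathrm{MV}}(x)=\arg\max_j \mathbb{E}_{h\sim\rho}[\mathbb{1}(h(x)=j)]$ (ties broken arbitrarily). The disagreement rate is $D(h,h')=\mathbb{E}_{X\sim\mathcal{D}}[\mathbb{1}(h(X)\neq h'(X))]$, and in $\mathbb{E}_{h,h'\sim\rho}[D(h,h')]$ the classifiers $h,h'$ are drawn independently from $\rho$. *)

(* Defs.v *)
From HB Require Import structures.
From mathcomp Require Import all_boot all_order all_algebra.
From mathcomp Require Import all_classical all_reals all_analysis.
Set Implicit Arguments. Unset Strict Implicit. Unset Printing Implicit Defensive.
Import Order.TTheory GRing.Theory Num.Theory.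
Local Open Scope classical_set_scope.
Local Open Scope ring_scope.

(* Label set Y = {1,...,K}, encoded as the ordinal type with K.-1.+1
   elements (= K elements under the standing hypothesis 2 <= K); the
   form n.+1 makes it a pointed type, required by measurableType. *)
Definition label (K : nat) : Type := 'I_K.-1.+1.
HB.instance Definition _ K := Choice.on (label K).
HB.instance Definition _ K := isPointed.Build (label K) ord0.
HB.instance Definition _ K := @isMeasurable.Build default_measure_display
  (label K) discrete_measurable discrete_measurable0
  discrete_measurableC discrete_measurableU.

Local Open Scope ereal_scope.

Section defs.
Context (R : realType) (d1 d2 : measure_display)
  (X : measurableType d1) (H : measurableType d2) (K : nat)
  (ev : H -> X -> label K)
  (D : probability (X * label K)%type R) (rho : probability H R).

Definition err (f : X -> label K) : \bar R :=
  \int[D]_z ((f z.1 != z.2)%:R)%:E.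

Definition Wrho (z : X * label K) : \bar R :=
  \int[rho]_h ((ev h z.1 != z.2)%:R)%:E.

Definition disagreement (h h' : H) : \bar R :=
  \int[D]_z ((ev h z.1 != ev h' z.1)%:R)%:E.

Definition gibbs_loss : \bar R := \int[rho]_h err (ev h).

Definition expected_disagreement : \bar R :=
  \int[rho]_h \int[rho]_h' disagreement h h'.

Definition is_majority_vote (f : X -> label K) : Prop :=
  forall x (j : label K),
    \int[rho]_h ((ev h x == j)%:R)%:E <= \int[rho]_h ((ev h x == f x)%:R)%:E.

Definition competent : Prop :=
  forall t : R, (0 <= t <= 2^-1)%R ->
    D [set z | (2^-1)%:E <= Wrho z <= (1 - t)%:E]
      <= D [set z | t%:E <= Wrho z < (2^-1)%:E].
End defs.

(* Main.v *)
Require Import Defs.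
From HB Require Import structures.
From mathcomp Require Import all_boot all_order all_algebra.
From mathcomp Require Import all_classical all_reals all_analysis.
From mathcomp Require Import measurable_realfun.
From mathcomp Require Import ring lra.
Set Implicit Arguments. Unset Strict Implicit. Unset Printing Implicit Defensive.
Import Order.TTheory GRing.Theory Num.Theory.
Local Open Scope classical_set_scope.
Local Open Scope ring_scope.
Section basic.
Context {R : realType}.

Lemma mbool d (T : measurableType d) (b : T -> bool) :
  measurable_fun setT b -> measurable_fun setT (fun t => ((b t)%:R : R)).
Proof.
by move=> mb; apply: (measurableT_comp (f := fun b : bool => (b%:R : R))).
Qed.


Lemma mlabfun d (T : measurableType d) K (f : label K -> T) :
  measurable_fun setT f.
Proof. by move=> ? ? ?. Qed.


Lemma bint d (T : measurableType d) (mu : probability T R) (f : T -> R) (M : R) :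
  measurable_fun setT f -> (forall t, `|f t| <= M) -> mu.-integrable setT (EFin \o f).
Proof.
move=> mf fM; apply: measurable_bounded_integrable => //.
  by apply: (le_lt_trans (probability_le1 mu measurableT)); rewrite ltry.
exists M; split; first exact: num_real.
by move=> M' MM' t _; apply: le_trans (fM t) (ltW MM').
Qed.

Lemma bool_int d (T : measurableType d) (mu : probability T R) (b : T -> bool) :
  measurable_fun setT b -> mu.-integrable setT (EFin \o (fun t => ((b t)%:R : R))).
Proof.
move=> mb; apply: (@bint _ _ _ _ 1); first exact: mbool.
by move=> t; case: (b t); rewrite ?normr1 ?normr0.
Qed.

Lemma int1 d (T : measurableType d) (mu : probability T R) :
  (\int[mu]_t (1:R)%:E = 1)%E.
Proof.
have := integral_cst mu measurableT 1%:E => ->; rewrite mul1e; exact: probability_setT.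
Qed.

Lemma cst_int d (T : measurableType d) (mu : probability T R) (c : R) :
  mu.-integrable setT (EFin \o (fun _ : T => c)).
Proof. by apply: (@bint _ _ _ _ `|c|) => //. Qed.

End basic.
Section reals.
Context {R : realType}.

Lemma sum_bool_le n (b : nat -> bool) : \sum_(k < n) ((b k)%:R : R) <= n%:R.
Proof.
rewrite -[n in X in _ <= X]card_ord -sumr_const; apply: ler_sum => k _.
by case: (b k).
Qed.

Lemma cnt_ub (a d w : R) n : 0 < d ->
  d * \sum_(k < n) ((a + k.+1%:R * d <= w)%R%:R : R) <= Num.max (w - a) 0.
Proof.
move=> d0; elim: n => [|n IH]; first by rewrite big_ord0 mulr0 le_max lexx orbT.
rewrite big_ord_recr /=; case: (boolP (a + n.+1%:R * d <= w)) => hw; last first.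
  by rewrite addr0.
rewrite le_max; apply/orP; left.
have := sum_bool_le n (fun k => a + k.+1%:R * d <= w).
rewrite mulrDr mulr1 -natr1 in hw *.
move=> hs; have := ler_wpM2l (ltW d0) hs; nra.
Qed.

Lemma cnt_all (a d w : R) n : 0 < d -> a + n%:R * d <= w ->
  \sum_(k < n) ((a + k.+1%:R * d <= w)%R%:R : R) = n%:R.
Proof.
move=> d0 hw; rewrite -[n in RHS]card_ord -sumr_const; apply: eq_bigr => k _.
suff -> : a + k.+1%:R * d <= w by [].
apply: le_trans hw; rewrite lerD2l ler_pM2r // ler_nat; exact: ltn_ord.
Qed.

Lemma cnt_lb (a d w : R) n : 0 < d -> w - a - d <= n%:R * d ->
  w - a - d <= d * \sum_(k < n) ((a + k.+1%:R * d <= w)%R%:R : R).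
Proof.
move=> d0; elim: n => [|n IH]; first by rewrite big_ord0 mulr0 mul0r.
rewrite big_ord_recr /= => hn; case: (boolP (a + n.+1%:R * d <= w)) => hw.
  have hw' : a + n%:R * d <= w by apply: le_trans hw; rewrite lerD2l ler_pM2r // ler_nat.
  rewrite cnt_all // mulrDr mulr1; rewrite -natr1 in hn; nra.
rewrite addr0; apply: IH; move: hw; rewrite -natr1 -ltNge => hw; nra.
Qed.

Lemma lim_n (x y c : R) : 0 <= c ->
  (forall n, (0 < n)%N -> x <= y + c / n%:R) -> x <= y.
Proof.
move=> c0 h; apply/ler_addgt0Pr => e e0.
set n := (Num.truncn (c / e)).+1.
have hn : 0 < n%:R :> R by rewrite ltr0n.
have h1 : c / e < n%:R by exact: truncnS_gt.
apply: le_trans (h n isT) _; rewrite lerD2l; apply: ltW.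
by rewrite ltr_pdivrMr // mulrC -ltr_pdivrMr.
Qed.


Definition dl (a : R) n := (2^-1 - a) / n%:R.
Definition tk (a : R) n (k : nat) := a + k.+1%:R * dl a n.
Definition SA a n w := \sum_(k < n) dl a n * ((tk a n k <= w) && (w < 2^-1))%R%:R.
Definition SB a n w := \sum_(k < n) dl a n * ((2^-1 <= w) && (w <= 1 - tk a n k))%R%:R.

Lemma dl_gt0 a n : a < 2^-1 -> (0 < n)%N -> 0 < dl a n.
Proof. by move=> ha hn; rewrite /dl divr_gt0 ?subr_gt0 ?ltr0n. Qed.

Lemma ndl a n : (0 < n)%N -> n%:R * dl a n = 2^-1 - a.
Proof. by move=> hn; rewrite /dl mulrC divfK // pnatr_eq0 -lt0n. Qed.

Lemma SAB a n w : a < 2^-1 -> (0 < n)%N ->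
  (w < 2^-1 -> SB a n w = 0 /\ SA a n w <= Num.max (w - a) 0) /\
  (2^-1 <= w -> SA a n w = 0 /\ 0 <= SB a n w /\ 1 - w - a - dl a n <= SB a n w).
Proof.
move=> ha hn; have d0 := dl_gt0 ha hn; split => hw.
  split.
    apply: big1 => k _; have -> : (2^-1 <= w) = false by apply/negbTE; rewrite -ltNge.
    by rewrite mulr0.
  rewrite /SA (eq_bigr (fun k : 'I_n => dl a n * (tk a n k <= w)%R%:R)); last by move=> k _; rewrite hw andbT.
  by rewrite -mulr_sumr; apply: cnt_ub.
have hw' : (w < 2^-1) = false by apply/negbTE; rewrite -leNgt.
split; first by apply: big1 => k _; rewrite hw' andbF mulr0.
split.
  by rewrite /SB; apply: sumr_ge0 => k _; apply: mulr_ge0; [exact: ltW|exact: ler0n].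
rewrite /SB; under eq_bigr => k _.
  rewrite hw /= (_ : (w <= 1 - tk a n k) = (a + k.+1%:R * dl a n <= 1 - w)); last first.
    by apply/idP/idP; rewrite /tk => ?; lra.
  over.
rewrite -mulr_sumr; apply: cnt_lb => //.
rewrite ndl //; lra.
Qed.

Lemma P0 n w : (0 < n)%N -> 0 <= w <= 1 ->
  (2^-1 <= w)%R%:R + SA 0 n w <= w + dl 0 n + SB 0 n w.
Proof.
move=> hn /andP[w0 w1]; have h0 : (0:R) < 2^-1 by rewrite invr_gt0.
have d0 := dl_gt0 h0 hn.
have [hw|hw] := ltP w 2^-1.
  have [-> hA] := (SAB w h0 hn).1 hw.
  move: hA; rewrite subr0 (max_l w0) => hA; rewrite addr0 (_ : false%:R = 0 :> R) //; lra.
have [-> [hB0 hB]] := (SAB w h0 hn).2 hw.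
rewrite addr0 (_ : true%:R = 1 :> R) //; lra.
Qed.

Lemma P1 n w : (0 < n)%N -> 0 <= w <= 1 ->
  2^-1 * (2^-1 <= w)%R%:R + SA 4^-1 n w <= w ^+ 2 + dl 4^-1 n + SB 4^-1 n w.
Proof.
move=> hn /andP[w0 w1]; have h4 : (4^-1 : R) < 2^-1 by lra.
have d0 := dl_gt0 h4 hn.
have [hw|hw] := ltP w 2^-1.
  have [-> hA] := (SAB w h4 hn).1 hw.
  move: hA; rewrite addr0 (_ : false%:R = 0 :> R) // mulr0 add0r.
  have [hm|hm] := leP (w - 4^-1) 0.
    move=> hA; nra.
  move=> hA; nra.
have [-> [hB0 hB]] := (SAB w h4 hn).2 hw.
rewrite addr0 (_ : true%:R = 1 :> R) // mulr1.
have [hm|hm] := leP w (3/4).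
  nra.
nra.
Qed.

Lemma cancel_aux (x y p q r : R) : x + p <= y + r + q -> q <= p -> x <= y + r.
Proof. lra. Qed.

Lemma cs_sum (I : finType) (P : pred I) (a : I -> R) :
  0 < \sum_(i | P i) (1 : R) ->
  (\sum_(i | P i) a i) ^+ 2 <= (\sum_(i | P i) 1) * \sum_(i | P i) a i ^+ 2.
Proof.
set s := \sum_(i | P i) a i; set m := \sum_(i | P i) (1 : R); set q := \sum_(i | P i) a i ^+ 2.
move=> mp.
have h : 0 <= \sum_(i | P i) (m * a i - s) ^+ 2 by apply: sumr_ge0 => i _; exact: sqr_ge0.
have e : \sum_(i | P i) (m * a i - s) ^+ 2 =
   m ^+ 2 * q + (s ^+ 2 * m - 2 * m * s * s).
  rewrite (eq_bigr (fun i => m ^+ 2 * a i ^+ 2 + (s ^+ 2 * 1 - 2 * m * s * a i))); last first.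
    by move=> i _; ring.
  rewrite big_split /= -mulr_sumr; congr (_ + _).
  by rewrite sumrB -!mulr_sumr.
rewrite e in h.
have h2 : 0 <= m * (m * q - s ^+ 2).
  by have -> : m * (m * q - s ^+ 2) = m ^+ 2 * q + (s ^+ 2 * m - 2 * m * s * s) by ring.
by rewrite -subr_ge0; move: h2; rewrite pmulr_rge0.
Qed.

Lemma pt_c (k W Dd : R) : 2 <= k -> k * W ^+ 2 + (k - 1) * Dd <= 2 * (k - 1) * W ->
  2 * W ^+ 2 + (4 * (k - 1) / k) / 2 * Dd <= (4 * (k - 1) / k) * W.
Proof.
move=> k2 h; have k0 : 0 < k by lra.
rewrite -(ler_pM2l k0).
have -> : k * (2 * W ^+ 2 + (4 * (k - 1) / k) / 2 * Dd) = 2 * (k * W ^+ 2 + (k - 1) * Dd).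
  by field; rewrite gt_eqF.
have -> : k * ((4 * (k - 1) / k) * W) = 2 * (2 * (k - 1) * W).
  by field; rewrite gt_eqF.
lra.
Qed.

Lemma final_arith (e g dd b s c : R) : e <= b -> b <= g -> 2^-1 * b <= s ->
  2 * s + c / 2 * dd <= c * g -> g <= dd + e ->
  [/\ e <= c * (g - 2^-1 * dd), e <= g & g - dd <= e].
Proof. move=> *; split; lra. Qed.

End reals.
Section main.
Context (R : realType) (d1 d2 : measure_display)
  (X : measurableType d1) (H : measurableType d2) (K : nat)
  (ev : H -> X -> label K)
  (ev_meas : forall j : label K, measurable [set p : H * X | ev p.1 p.2 = j])
  (D : probability (X * label K)%type R) (rho : probability H R).

Definition labm d (T : measurableType d) (l : T -> label K) :=
  forall j, measurable_fun setT (fun t => l t == j).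

Lemma labm_comp d (T : measurableType d) (l : T -> label K) :
  measurable_fun setT l -> labm l.
Proof.
by move=> ml j; apply: (measurableT_comp (f := fun l : label K => l == j)).
Qed.

Lemma labm_ev d (T : measurableType d) (f : T -> H) (g : T -> X) :
  measurable_fun setT f -> measurable_fun setT g ->
  labm (fun t => ev (f t) (g t)).
Proof.
move=> mf mg j; apply: (measurable_fun_bool true); rewrite setTI.
have -> : (fun t => ev (f t) (g t) == j) @^-1` [set true] =
   (fun t => (f t, g t)) @^-1` [set p : H * X | ev p.1 p.2 = j].
  by apply/seteqP; split => t /= /eqP.
rewrite -[X in measurable X]setTI.
exact: (measurable_fun_pair mf mg) (ev_meas j).
Qed.

Lemma eqsum (a b : label K) :
  ((a == b)%:R : R) = \sum_j (a == j)%:R * (b == j)%:R.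
Proof.
rewrite (bigD1 a) //= eqxx mul1r big1 ?addr0; first by rewrite eq_sym.
by move=> j; rewrite eq_sym => /negbTE ->; rewrite mul0r.
Qed.

Lemma meq d (T : measurableType d) (l1 l2 : T -> label K) :
  labm l1 -> labm l2 -> measurable_fun setT (fun t => ((l1 t == l2 t)%:R : R)).
Proof.
move=> m1 m2; rewrite (_ : (fun t => _) = fun t => \sum_j ((l1 t == j)%:R * (l2 t == j)%:R)); last first.
  by apply/funext => t; rewrite eqsum.
apply: measurable_sum => j; apply: measurable_realfun.measurable_funM; exact: mbool.
Qed.

Lemma mneq d (T : measurableType d) (l1 l2 : T -> label K) :
  labm l1 -> labm l2 -> measurable_fun setT (fun t => ((l1 t != l2 t)%:R : R)).
Proof.
move=> m1 m2; rewrite (_ : (fun t => _) = fun t => 1 - ((l1 t == l2 t)%:R)); last first.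
  by apply/funext => t; case: eqP => _; rewrite /= ?subrr ?subr0.
apply: measurable_realfun.measurable_funB => //; exact: meq.
Qed.

Lemma mset d (T : measurableType d) (b : T -> bool) :
  measurable_fun setT b -> measurable [set t | b t].
Proof.
move=> mb; have := mb measurableT [set true] I; rewrite setTI.
by congr measurable; apply/seteqP; split => t.
Qed.

Definition pr (j : label K) (x : X) : R := fine (rho [set h | ev h x == j]).

Lemma prm j x : measurable [set h | ev h x == j].
Proof. apply: mset; have := (labm_ev (@measurable_id _ H setT) (measurable_cst x) j); exact. Qed.

Lemma prEE j x : (pr j x)%:E = rho [set h | ev h x == j].
Proof. by rewrite /pr fineK // fin_num_measure //; exact: prm. Qed.

Lemma intbool d (T : measurableType d) (mu : {measure set T -> \bar R}) (b : T -> bool) :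
  measurable [set t | b t] ->
  (\int[mu]_t ((b t)%:R)%:E = mu [set t | b t])%E.
Proof.
move=> mb; rewrite -(setIT [set t | b t]) -integral_indic //; apply: eq_integral => t _.
rewrite indicE.
have -> : (t \in [set t0 | b t0]) = b t by apply/idP/idP; rewrite inE.
by [].
Qed.

Lemma prE j x : (\int[rho]_h ((ev h x == j)%:R)%:E = (pr j x)%:E)%E.
Proof. by rewrite prEE intbool //; exact: prm. Qed.

Lemma pr_ge0 j x : 0 <= pr j x.
Proof. by rewrite -lee_fin prEE measure_ge0. Qed.

Lemma pr_le1 j x : pr j x <= 1.
Proof. by rewrite -lee_fin prEE probability_le1 //; exact: prm. Qed.

Lemma mpr j : measurable_fun setT (pr j).
Proof.
apply/measurable_realfun.measurable_EFinP.
rewrite (_ : _ \o _ = rho \o ysection [set p : H * X | ev p.1 p.2 = j]).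
  exact: measurable_fun_ysection.
apply/funext => x /=; rewrite prEE; congr (rho _).
by apply/seteqP; split => h /=; rewrite /ysection /= in_setE /=; move/eqP.
Qed.

Lemma mind d (T : measurableType d) (f : T -> H) (g : T -> X) j :
  measurable_fun setT f -> measurable_fun setT g ->
  measurable_fun setT (fun t => ((ev (f t) (g t) == j)%:R : R)).
Proof. by move=> mf mg; apply: mbool; exact: labm_ev. Qed.

Lemma sum_pr x : \sum_j pr j x = 1.
Proof.
suff : ((\sum_j pr j x)%:E = 1%:E)%E by case.
rewrite -sumEFin.
rewrite (eq_bigr (fun j => \int[rho]_h ((ev h x == j)%:R)%:E)%E); last by move=> j _; rewrite prE.
have mf j : measurable_fun setT (EFin \o (fun h => ((ev h x == j)%:R : R))).
  apply/measurable_realfun.measurable_EFinP.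
  exact: (mind _ (@measurable_id _ H setT) (measurable_cst x)).
rewrite -(ge0_integral_sum rho measurableT mf); last by move=> j h _; rewrite lee_fin.
rewrite -(int1 rho); apply: eq_integral => h _; rewrite sumEFin; congr EFin.
rewrite (bigD1 (ev h x)) //= eqxx big1 ?addr0 // => j.
by rewrite eq_sym => /negbTE ->.
Qed.

Lemma compl_pr x j : (\int[rho]_h ((ev h x != j)%:R)%:E = (1 - pr j x)%:E)%E.
Proof.
rewrite (eq_integral (fun h => (1%:E - ((ev h x == j)%:R)%:E)%E)); last first.
  by move=> h _; rewrite -EFinB; case: eqP => _; rewrite /= ?subrr ?subr0.
rewrite (integralB_EFin (f1 := fun=> 1)) //; last 2 first.
- exact: cst_int.
- apply: bool_int; exact: (labm_ev (@measurable_id _ H setT) (measurable_cst x) j).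
by rewrite int1 prE.
Qed.

Lemma W_E z : Wrho ev rho z = (1 - pr z.2 z.1)%:E.
Proof. exact: compl_pr. Qed.

Lemma prsum x l : pr l x = \sum_j (l == j)%:R * pr j x.
Proof.
rewrite (bigD1 l) //= eqxx mul1r big1 ?addr0 // => j.
by rewrite eq_sym => /negbTE ->; rewrite mul0r.
Qed.

Lemma mprsum x : measurable_fun setT (fun h => \sum_j (ev h x == j)%:R * pr j x).
Proof.
apply: measurable_sum => j; apply: measurable_funM => //.
exact: (mind _ (@measurable_id _ H setT) (measurable_cst x)).
Qed.

Lemma Dx_E x : (\int[rho]_h (1 - pr (ev h x) x)%:E
   = (1 - \sum_j pr j x ^+ 2)%:E)%E.
Proof.
rewrite (eq_integral (fun h => (1%:E - (\sum_j (ev h x == j)%:R * pr j x)%:E)%E)); last first.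
  by move=> h _; rewrite EFinB -prsum.
rewrite (integralB_EFin (f1 := fun=> 1) (f2 := fun h => \sum_j (ev h x == j)%:R * pr j x)) //; last 2 first.
- exact: cst_int.
- apply: (@bint _ _ _ _ _ 1); first exact: mprsum.
  by move=> h; rewrite -prsum ger0_norm ?pr_ge0 ?pr_le1.
rewrite int1 EFinB; congr (_ - _)%E.
under eq_integral do rewrite -sumEFin.
rewrite integral_sum //; last first.
  move=> j; apply: (@bint _ _ _ _ _ 1).
    apply: measurable_funM => //.
    exact: (mind _ (@measurable_id _ H setT) (measurable_cst x)).
  move=> h; rewrite normrM ger0_norm ?pr_ge0 // ger0_norm ?pr_ge0 //.
  by case: (_ == _); rewrite ?mul1r ?mul0r ?pr_le1.
rewrite -sumEFin; apply: eq_bigr => j _.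
under eq_integral do rewrite EFinM muleC.
rewrite integralZl //; last first.
  apply: bool_int; exact: (labm_ev (@measurable_id _ H setT) (measurable_cst x) j).
by rewrite prE -EFinM expr2.
Qed.

Lemma mevfst : labm (fun p : H * (X * label K) => ev p.1 p.2.1).
Proof. apply: labm_ev => //; exact: measurableT_comp. Qed.

Lemma G1 : gibbs_loss ev D rho = (\int[D]_z (1 - pr z.2 z.1)%:E)%E.
Proof.
under [RHS]eq_integral do rewrite -W_E.
pose f := fun p : H * (X * label K) => (((ev p.1 p.2.1 != p.2.2)%:R : R)%:E).
have mf : measurable_fun setT f.
  apply/measurable_EFinP; apply: mneq; first exact: mevfst.
  by apply: labm_comp; apply: measurableT_comp.
have f0 p : (0 <= f p)%E by rewrite lee_fin.
exact: (@fubini_tonelli _ _ _ _ _ rho D f mf f0).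
Qed.

Lemma G2 : expected_disagreement ev D rho = (\int[D]_z (1 - \sum_j pr j z.1 ^+ 2)%:E)%E.
Proof.
rewrite /expected_disagreement /disagreement.
transitivity (\int[rho]_h \int[D]_z (1 - pr (ev h z.1) z.1)%:E)%E.
  apply: eq_integral => h _.
  pose f := fun p : H * (X * label K) => (((ev h p.2.1 != ev p.1 p.2.1)%:R : R)%:E).
  have mf : measurable_fun setT f.
    apply/measurable_EFinP; apply: mneq; last exact: mevfst.
    by apply: labm_ev => //; exact: measurableT_comp.
  have f0 p : (0 <= f p)%E by rewrite lee_fin.
  rewrite (@fubini_tonelli _ _ _ _ _ rho D f mf f0); apply: eq_integral => z _.
  by rewrite /f /=; under eq_integral do rewrite eq_sym; rewrite compl_pr.
pose f := fun p : H * (X * label K) => ((1 - pr (ev p.1 p.2.1) p.2.1)%:E : \bar R).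
have mf : measurable_fun setT f.
  apply/measurable_EFinP; apply: measurable_funB => //.
  rewrite (_ : (fun p => _) = fun p : H * (X * label K) =>
     \sum_j (ev p.1 p.2.1 == j)%:R * pr j p.2.1); last first.
    by apply/funext => p; rewrite prsum.
  apply: measurable_sum => j; apply: measurable_funM.
    by apply: mbool; exact: mevfst.
  by apply: measurableT_comp; [exact: mpr|apply: measurableT_comp].
have f0 p : (0 <= f p)%E by rewrite lee_fin subr_ge0 pr_le1.
rewrite (@fubini_tonelli _ _ _ _ _ rho D f mf f0); apply: eq_integral => z _.
exact: Dx_E.
Qed.

Definition w (z : X * label K) := 1 - pr z.2 z.1.

Lemma mw : measurable_fun setT w.
Proof.
apply: measurable_funB => //.
rewrite (_ : (fun z => _) = fun z : X * label K => \sum_j (z.2 == j)%:R * pr j z.1); last first.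
  by apply/funext => z; rewrite prsum.
apply: measurable_sum => j; apply: measurable_funM.
  by apply: mbool; apply: labm_comp.
exact: measurableT_comp (mpr j) _.
Qed.

Lemma w01 z : 0 <= w z <= 1.
Proof. by rewrite /w subr_ge0 pr_le1 /= lerBlDr lerDl pr_ge0. Qed.

Lemma RIE (f : X * label K -> R) M : measurable_fun setT f -> (forall z, `|f z| <= M) ->
  (\int[D]_z (f z)%:E = (Rintegral D setT f)%:E)%E.
Proof.
move=> mf fM; rewrite /Rintegral fineK //.
exact: integrable_fin_num (@bint _ _ _ D _ _ mf fM).
Qed.

Lemma intsum (c : R) n (b : nat -> X * label K -> bool) :
  (forall k, measurable_fun setT (b k)) ->
  (\int[D]_z (\sum_(k < n) c * (b k z)%:R)%:E =
   (\sum_(k < n) c * fine (D [set z | b k z]))%:E)%E.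
Proof.
move=> mb; under eq_integral do rewrite -sumEFin.
rewrite integral_sum //; last first.
  move=> k; apply: (@bint _ _ _ _ _ `|c|).
    by apply: measurable_funM => //; apply: mbool.
  by move=> z; rewrite normrM; case: (b k z); rewrite ?normr1 ?normr0 ?mulr1 ?mulr0.
rewrite -sumEFin; apply: eq_bigr => k _.
under eq_integral do rewrite EFinM.
rewrite integralZl //; last exact: bool_int.
rewrite intbool; last exact: mset.
by rewrite EFinM fineK // fin_num_measure //; exact: mset.
Qed.

Lemma mbA (t : R) : measurable_fun setT (fun z => (t <= w z) && (w z < 2^-1)).
Proof.
apply: measurable_and; first exact: measurable_fun_ler mw.
exact: measurable_fun_ltr mw _.
Qed.

Lemma mbB (t : R) : measurable_fun setT (fun z => (2^-1 <= w z) && (w z <= 1 - t)).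
Proof.
apply: measurable_and; first exact: measurable_fun_ler mw.
exact: measurable_fun_ler mw _.
Qed.

Lemma compet_k (hcomp : competent ev D rho) t : 0 <= t <= 2^-1 ->
  fine (D [set z | (2^-1 <= w z) && (w z <= 1 - t)]) <=
  fine (D [set z | (t <= w z) && (w z < 2^-1)]).
Proof.
move=> ht; apply: fine_le; try (rewrite fin_num_measure //; apply: mset; first [exact: mbA | exact: mbB]).
have := hcomp t ht.
have -> : [set z | ((2^-1)%:E <= Wrho ev rho z <= (1 - t)%:E)%E] =
          [set z | (2^-1 <= w z) && (w z <= 1 - t)].
  by apply/seteqP; split => z /=; rewrite W_E !lee_fin.
have -> // : [set z | (t%:E <= Wrho ev rho z < (2^-1)%:E)%E] =
          [set z | (t <= w z) && (w z < 2^-1)].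
by apply/seteqP; split => z /=; rewrite W_E lee_fin lte_fin.
Qed.

Lemma mSA a n : measurable_fun setT (fun z => SA a n (w z)).
Proof.
apply: measurable_sum => k; apply: measurable_funM => //; apply: mbool; exact: mbA.
Qed.

Lemma mSB a n : measurable_fun setT (fun z => SB a n (w z)).
Proof.
apply: measurable_sum => k; apply: measurable_funM => //; apply: mbool; exact: mbB.
Qed.

Lemma SA_ge0 (a x : R) n : a < 2^-1 -> (0 < n)%N -> 0 <= SA a n x.
Proof.
move=> ha hn; apply: sumr_ge0 => k _; apply: mulr_ge0; [exact/ltW/dl_gt0|exact: ler0n].
Qed.

Lemma SB_ge0 (a x : R) n : a < 2^-1 -> (0 < n)%N -> 0 <= SB a n x.
Proof.
move=> ha hn; apply: sumr_ge0 => k _; apply: mulr_ge0; [exact/ltW/dl_gt0|exact: ler0n].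
Qed.

Lemma intcst (c : R) : (\int[D]_z (c%:E) = c%:E)%E.
Proof. have := integral_cst D measurableT c%:E => ->; rewrite -[RHS]mule1; congr (_ * _)%E; exact: probability_setT. Qed.

Lemma intD2 (f g : X * label K -> R) : (forall z, 0 <= f z) -> measurable_fun setT f ->
  (forall z, 0 <= g z) -> measurable_fun setT g ->
  (\int[D]_z (f z + g z)%:E = \int[D]_z (f z)%:E + \int[D]_z (g z)%:E)%E.
Proof.
move=> f0 mf g0 mg; under eq_integral do rewrite EFinD.
apply: ge0_integralD => //.
- by move=> z _; rewrite lee_fin.
- exact/measurable_EFinP.
- by move=> z _; rewrite lee_fin.
- exact/measurable_EFinP.
Qed.

Lemma compet_int (hcomp : competent ev D rho) a n (F G : X * label K -> R) MF MG :
  0 <= a -> a < 2^-1 -> (0 < n)%N ->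
  measurable_fun setT F -> measurable_fun setT G ->
  (forall z, 0 <= F z) -> (forall z, 0 <= G z) ->
  (forall z, F z <= MF) -> (forall z, G z <= MG) ->
  (forall z, F z + SA a n (w z) <= G z + dl a n + SB a n (w z)) ->
  Rintegral D setT F <= Rintegral D setT G + dl a n.
Proof.
move=> a0 ha hn mF mG F0 G0 FM GM hFG.
have d0 := dl_gt0 ha hn.
set A := \sum_(k < n) dl a n * fine (D [set z | (tk a n k <= w z) && (w z < 2^-1)]).
set B := \sum_(k < n) dl a n * fine (D [set z | (2^-1 <= w z) && (w z <= 1 - tk a n k)]).
have hAB : B <= A.
  apply: ler_sum => k _; apply: ler_wpM2l; first exact: ltW.
  apply: compet_k => //; apply/andP; split.
    by rewrite /tk addr_ge0 // mulr_ge0 // ltW.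
  have h1 : k.+1%:R * dl a n <= n%:R * dl a n by rewrite ler_pM2r // ler_nat.
  have := ndl a hn; rewrite /tk; lra.
have iA : (\int[D]_z (SA a n (w z))%:E = A%:E)%E.
  exact: (intsum (dl a n) n (fun k => mbA (tk a n k))).
have iB : (\int[D]_z (SB a n (w z))%:E = B%:E)%E.
  exact: (intsum (dl a n) n (fun k => mbB (tk a n k))).
have FM' z : `|F z| <= MF by rewrite ger0_norm.
have GM' z : `|G z| <= MG by rewrite ger0_norm.
have le : (\int[D]_z (F z + SA a n (w z))%:E <= \int[D]_z (G z + dl a n + SB a n (w z))%:E)%E.
  apply: ge0_le_integral => //.
  - by move=> z _; rewrite lee_fin addr_ge0 // SA_ge0.
  - by apply/measurable_EFinP; apply: measurable_funD => //; exact: mSA.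
  - by apply/measurable_EFinP; apply: measurable_funD => //; [apply: measurable_funD|exact: mSB].
  - by move=> z _; rewrite lee_fin.
have SA0 z : 0 <= SA a n (w z) by rewrite SA_ge0.
have SB0 z : 0 <= SB a n (w z) by rewrite SB_ge0.
have Gd0 z : 0 <= G z + dl a n by rewrite addr_ge0 // ltW.
have mGd : measurable_fun setT (fun z => G z + dl a n) by apply: measurable_funD.
have dl0 (z : X * label K) : 0 <= (fun=> dl a n) z by rewrite /= ltW.
rewrite (intD2 F0 mF SA0 (mSA a n)) (intD2 Gd0 mGd SB0 (mSB a n)) in le.
rewrite (intD2 G0 mG dl0 (measurable_cst _)) in le.
rewrite iA iB (RIE mF FM') (RIE mG GM') intcst -!EFinD lee_fin in le.
exact: cancel_aux le hAB.
Qed.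

Lemma two_terms x (i j : label K) : i != j -> pr i x + pr j x <= 1.
Proof.
move=> ij; rewrite -(sum_pr x) (bigD1 i) //= lerD2l (bigD1 j) /=; last by rewrite eq_sym.
by rewrite lerDl; apply: sumr_ge0 => k _; exact: pr_ge0.
Qed.

Lemma sq_le x : \sum_j pr j x ^+ 2 <= 1.
Proof.
rewrite -(sum_pr x); apply: ler_sum => j _.
have := pr_ge0 j x; have := pr_le1 j x; nra.
Qed.

Lemma pr_vote (hMV : X -> label K) (hv : is_majority_vote ev rho hMV) x j :
  pr j x <= pr (hMV x) x.
Proof. by have := hv x j; rewrite !prE lee_fin. Qed.

Lemma m_le_B (hMV : X -> label K) (hv : is_majority_vote ev rho hMV) z :
  ((hMV z.1 != z.2)%:R : R) <= (2^-1 <= w z)%R%:R.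
Proof.
case: eqP => [_|ne]; first by rewrite ler0n.
suff -> : (2^-1 <= w z) by [].
have := two_terms z.1 (i := z.2) (j := hMV z.1).
have := pr_vote hv z.1 z.2.
rewrite /w; case: eqP => [e|_ h1 h2]; first by exfalso; apply: ne; rewrite e.
have := h2 isT; lra.
Qed.

Lemma w_le (hMV : X -> label K) (hv : is_majority_vote ev rho hMV) z :
  w z <= (1 - \sum_j pr j z.1 ^+ 2) + (hMV z.1 != z.2)%:R.
Proof.
case: eqP => [e|_].
  rewrite addr0 /w lerD2l lerN2 -e.
  apply: le_trans (_ : \sum_j pr j z.1 * pr (hMV z.1) z.1 <= _).
    apply: ler_sum => j _; rewrite expr2; apply: ler_wpM2l; first exact: pr_ge0.
    exact: pr_vote.
  by rewrite -mulr_suml sum_pr mul1r.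
have := sq_le z.1; have := w01 z; rewrite (_ : (~~ false)%:R = 1 :> R) //.
move=> /andP[_ h1] h2; lra.
Qed.

Lemma card_lab : \sum_(j : label K) (1 : R) = K.-1.+1%:R.
Proof. by rewrite sumr_const card_ord. Qed.

Lemma Kform (hK : (2 <= K)%N) z :
  K%:R * w z ^+ 2 + (K%:R - 1) * (1 - \sum_j pr j z.1 ^+ 2) <= 2 * (K%:R - 1) * w z.
Proof.
set x := z.1; set y := z.2.
have eK : K%:R = K.-1.+1%:R :> R by rewrite prednK // (leq_trans _ hK).
have hm : \sum_(j | j != y) (1 : R) = K%:R - 1.
  by rewrite eK -card_lab [in RHS](bigD1 y) //= addrC addrK.
have cs := @cs_sum _ _ (fun j => j != y) (fun j => pr j x).
rewrite hm in cs.
have K2 : 2%:R <= K%:R :> R by rewrite ler_nat.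
have := cs ltac:(lra).
have es : \sum_j pr j x = pr y x + \sum_(j | j != y) pr j x by rewrite (bigD1 y).
have eq : \sum_j pr j x ^+ 2 = pr y x ^+ 2 + \sum_(j | j != y) pr j x ^+ 2 by rewrite (bigD1 y).
rewrite sum_pr in es.
rewrite eq /w -/x -/y.
set S := \sum_(j | j != y) pr j x; set Q := \sum_(j | j != y) pr j x ^+ 2.
move: es; set p := pr y x => es hcs.
have hS : S = 1 - p by rewrite es addrC addKr.
rewrite hS in hcs.
nra.
Qed.

Lemma RIint (f : X * label K -> R) M : measurable_fun setT f -> (forall z, `|f z| <= M) ->
  D.-integrable setT (EFin \o f).
Proof. by move=> mf fM; exact: (@bint _ _ _ D _ _ mf fM). Qed.

Lemma ab01 (f : X * label K -> R) z : 0 <= f z <= 1 -> `|f z| <= 1.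
Proof. by case/andP => h0 h1; rewrite ger0_norm. Qed.

Lemma RIintZ (k : R) (f : X * label K -> R) M : measurable_fun setT f -> (forall z, `|f z| <= M) ->
  D.-integrable setT (EFin \o (fun z => k * f z)).
Proof.
move=> mf fM; apply: (RIint (M := `|k| * M)); first by apply: measurable_funM.
by move=> z; rewrite normrM ler_wpM2l.
Qed.

Lemma main_thm (hK : (2 <= K)%N) (hMV : X -> label K) (hMV_meas : measurable_fun setT hMV)
  (hv : is_majority_vote ev rho hMV) (hcomp : competent ev D rho) :
  (err D hMV <= Order.min
    (((4 * (K%:R - 1) / K%:R)%R)%:E *
       (gibbs_loss ev D rho - (2^-1)%:E * expected_disagreement ev D rho))
    (gibbs_loss ev D rho)
  /\ gibbs_loss ev D rho - expected_disagreement ev D rho <= err D hMV)%E.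
Proof.
pose m := fun z : X * label K => ((hMV z.1 != z.2)%:R : R).
pose Bz := fun z : X * label K => ((2^-1 <= w z)%R%:R : R).
pose dx := fun z : X * label K => 1 - \sum_j pr j z.1 ^+ 2.
pose w2 := fun z : X * label K => w z ^+ 2.
have mm : measurable_fun setT m.
  apply: mneq; apply: labm_comp; last exact: measurable_snd.
  exact: measurableT_comp hMV_meas measurable_fst.
have mB : measurable_fun setT Bz by apply: mbool; exact: measurable_fun_ler mw.
have mdx : measurable_fun setT dx.
  apply: measurable_funB => //; apply: measurable_sum => j.
  rewrite (_ : (fun z => _) = (fun z => pr j z.1 * pr j z.1)); last first.
    by apply/funext => z; rewrite expr2.
  by apply: measurable_funM; apply: measurableT_comp (mpr j) _.
have mw2 : measurable_fun setT w2 by apply: measurable_funM; exact: mw.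
have m01 z : 0 <= m z <= 1 by rewrite /m; case: (_ != _); rewrite ?ler01 ?lexx.
have B01 z : 0 <= Bz z <= 1 by rewrite /Bz; case: (2^-1 <= w z)%R; rewrite ?ler01 ?lexx.
have dx01 z : 0 <= dx z <= 1.
  rewrite /dx subr_ge0 sq_le /= lerBlDr lerDl; apply: sumr_ge0 => j _; exact: sqr_ge0.
have w201 z : 0 <= w2 z <= 1.
  rewrite /w2; have /andP[h0 h1] := w01 z; apply/andP; split; first exact: sqr_ge0.
  by rewrite expr2; nra.
have iw := RIint mw (fun z => ab01 (w01 z)).
have im := RIint mm (fun z => ab01 (m01 z)).
have iB := RIint mB (fun z => ab01 (B01 z)).
have idx := RIint mdx (fun z => ab01 (dx01 z)).
have iw2 := RIint mw2 (fun z => ab01 (w201 z)).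
set e := Rintegral D setT m.
set g := Rintegral D setT w.
set dd := Rintegral D setT dx.
set b := Rintegral D setT Bz.
set s := Rintegral D setT w2.
have ee : err D hMV = e%:E by exact: RIE mm (fun z => ab01 (m01 z)).
have eg : gibbs_loss ev D rho = g%:E by rewrite G1; exact: RIE mw (fun z => ab01 (w01 z)).
have ed : expected_disagreement ev D rho = dd%:E by rewrite G2; exact: RIE mdx (fun z => ab01 (dx01 z)).
have f1 : e <= b.
  apply: le_Rintegral => // z _; exact: m_le_B.
have f2 : b <= g.
  apply: (@lim_n _ _ _ 2^-1); first by rewrite invr_ge0.
  move=> n hn; have := @compet_int hcomp 0 n Bz w 1 1 (lexx _) ltac:(by rewrite invr_gt0) hn mB mw
    (fun z => proj1 (andP (B01 z))) (fun z => proj1 (andP (w01 z)))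
    (fun z => proj2 (andP (B01 z))) (fun z => proj2 (andP (w01 z))).
  by move/(_ (fun z => P0 hn (w01 z))); rewrite /dl subr0.
have f3 : 2^-1 * b <= s.
  have ib2 : Rintegral D setT (fun z => 2^-1 * Bz z) = 2^-1 * b by rewrite RintegralZl.
  rewrite -ib2; apply: (@lim_n _ _ _ (2^-1 - 4^-1)); first by lra.
  move=> n hn.
  have h4 : (4^-1 : R) < 2^-1 by lra.
  have := @compet_int hcomp 4^-1 n (fun z => 2^-1 * Bz z) w2 1 1 ltac:(lra) h4 hn
    (measurable_funM (measurable_cst _) mB) mw2.
  apply.
  - by move=> z; apply: mulr_ge0; [rewrite invr_ge0|case/andP: (B01 z)].
  - by move=> z; case/andP: (w201 z).
  - move=> z; case/andP: (B01 z) => _ h; lra.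
  - by move=> z; case/andP: (w201 z).
  - by move=> z; exact: P1 hn (w01 z).
have f4 : 2 * s + (4 * (K%:R - 1) / K%:R) / 2 * dd <= (4 * (K%:R - 1) / K%:R) * g.
  have iL : Rintegral D setT (fun z => 2 * w2 z + (4 * (K%:R - 1) / K%:R) / 2 * dx z) =
      2 * s + (4 * (K%:R - 1) / K%:R) / 2 * dd.
    rewrite RintegralD //; last 2 first.
    - exact: (RIintZ _ mw2 (fun z => ab01 (w201 z))).
    - exact: (RIintZ _ mdx (fun z => ab01 (dx01 z))).
    by rewrite !RintegralZl.
  have iR : Rintegral D setT (fun z => (4 * (K%:R - 1) / K%:R) * w z) =
      (4 * (K%:R - 1) / K%:R) * g by rewrite RintegralZl.
  rewrite -iL -iR; apply: le_Rintegral => //.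
  - apply: (RIint (M := 2 * 1 + `|(4 * (K%:R - 1) / K%:R) / 2| * 1)).
      by apply: measurable_funD; apply: measurable_funM.
    move=> z; apply: le_trans (ler_normD _ _) _; apply: lerD; rewrite normrM.
      by rewrite ger0_norm // ler_wpM2l // (ab01 (w201 z)).
    by rewrite ler_wpM2l // (ab01 (dx01 z)).
  - exact: (RIintZ _ mw (fun z => ab01 (w01 z))).
  - move=> z _; apply: pt_c; first by rewrite (ler_nat _ 2 K).
    exact: Kform.
have f5 : g <= dd + e.
  rewrite -RintegralD //; apply: le_Rintegral => //.
  - apply: (RIint (M := 1 + 1)); first by apply: measurable_funD.
    move=> z; apply: le_trans (ler_normD _ _) _; apply: lerD; [exact: ab01 (dx01 z)|exact: ab01 (m01 z)].
  - by move=> z _; exact: w_le.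
have [r1 r2 r3] := final_arith f1 f2 f3 f4 f5.
have h1 : (((4 * (K%:R - 1) / K%:R)%R)%:E * (g%:E - (2^-1)%:E * dd%:E) =
   ((4 * (K%:R - 1) / K%:R) * (g - 2^-1 * dd))%R%:E)%E.
  by rewrite (EFinM (4 * (K%:R - 1) / K%:R)) EFinB (EFinM 2^-1 dd).
have h2 : (g%:E - dd%:E = (g - dd)%R%:E)%E by rewrite EFinB.
by rewrite ee eg ed le_min h1 h2 !lee_fin r1 r2 r3.
Qed.

End main.

Unset Implicit Arguments.
Local Open Scope ereal_scope.

Theorem theorem3 (R : realType) (d1 d2 : measure_display)
  (X : measurableType d1) (H : measurableType d2) (K : nat)
  (hK : (2 <= K)%N)
  (ev : H -> X -> label K)
  (ev_meas : forall j : label K, measurable [set p : H * X | ev p.1 p.2 = j])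
  (D : probability (X * label K)%type R) (rho : probability H R)
  (hMV : X -> label K) (hMV_meas : measurable_fun setT hMV)
  (hMV_vote : is_majority_vote ev rho hMV)
  (hcomp : competent ev D rho) :
  err D hMV <= Order.min
    (((4 * (K%:R - 1) / K%:R)%R)%:E *
       (gibbs_loss ev D rho - (2^-1)%:E * expected_disagreement ev D rho))
    (gibbs_loss ev D rho)
  /\ gibbs_loss ev D rho - expected_disagreement ev D rho <= err D hMV.
Proof. exact: (main_thm ev_meas hK hMV_meas hMV_vote hcomp). Qed.
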